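(* A graph $G$ is a pseudo-cograph if and only if every induced subgraph of $G$ is a pseudo-cograph.
   Context: Graphs finite, simple, undirected; $G-v$ is $G$ with $v$ deleted; the join of vertex-disjoint graphs adds all edges between them to the disjoint union; a cograph is a graph without induced $P_4$. $G$ is a pseudo-cograph if $|V(G)|\le2$ or there are induced subgraphs $G_1,G_2$ of $G$ and $v\in V(G)$ with (F1) $V(G)=V(G_1)\cup V(G_2)$, $V(G_1)\cap V(G_2)=\{v\}$, $|V(G_1)|,|V(G_2)|>1$; (F2) $G_1,G_2$ are cographs; (F3) $G-v$ is the join or the disjoint union of $G_1-v$ and $G_2-v$. *)

(* Defs.v *)
(* A finite simple graph is represented by a symmetric,
   irreflexive relation e on a finType T (the ambient graph) together with
   a vertex set V : {set T}; the graph is the subgraph of (T,e) induced on V.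
   Induced subgraphs of (V,e) are exactly (W,e) for W \subset V. *)
From mathcomp Require Import all_boot.
Set Implicit Arguments.
Unset Strict Implicit.
Unset Printing Implicit Defensive.

Section Graphs.
Variable T : finType.
Variable e : rel T.

Definition has_induced_P4 (V : {set T}) : Prop :=
  exists a b c d : T,
    [/\ [/\ a \in V, b \in V, c \in V & d \in V],
        uniq [:: a; b; c; d],
        [/\ e a b, e b c & e c d] &
        [/\ ~~ e a c, ~~ e a d & ~~ e b d]].

Definition cograph (V : {set T}) : Prop := ~ has_induced_P4 V.

Definition pseudo_cograph (V : {set T}) : Prop :=
  #|V| <= 2 \/
  exists (V1 V2 : {set T}) (v : T),
    [/\ [/\ V = V1 :|: V2, V1 :&: V2 = [set v], 1 < #|V1| & 1 < #|V2|],
        cograph V1 /\ cograph V2 &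
        (forall x y, x \in V1 :\ v -> y \in V2 :\ v -> e x y) \/
        (forall x y, x \in V1 :\ v -> y \in V2 :\ v -> ~~ e x y)].

End Graphs.

(* Main.v *)
Require Import Defs.
From mathcomp Require Import all_boot.
Set Implicit Arguments. Unset Strict Implicit. Unset Printing Implicit Defensive.

Section S.
Variable T : finType.

Definition hsplit (e : rel T) (U : {set T}) :=
  exists X : {set T}, [/\ X \subset U, X != set0, U :\: X != set0 &
    (forall x y, x \in X -> y \in U :\: X -> e x y) \/
    (forall x y, x \in X -> y \in U :\: X -> ~~ e x y)].

Lemma core (e : rel T) (sym : symmetric e) (U : {set T}) (x : T) (A : {set T}) (b c : T) :
  x \in U -> A \subset U :\ x ->
  (forall a y, a \in A -> y \in (U :\ x) :\: A -> ~~ e a y) ->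
  c \in A -> ~~ e x c -> b \in (U :\ x) :\: A -> e x b ->
  ~ has_induced_P4 e U -> hsplit e U.
Proof.
move=> xU AU anti cA nxc bB exb noP4.
have Ax z : z \in A -> (z != x) && (z \in U).
  by move=> zA; have := subsetP AU z zA; rewrite in_setD1.
have bA : b \notin A by move: bB; rewrite in_setD => /andP[].
have /andP[bx bU] : (b != x) && (b \in U) by move: bB; rewrite in_setD in_setD1 => /andP[_].
exists [set z in A | ~~ e x z]; split.
- by apply/subsetP=> z; rewrite inE => /andP[/Ax /andP[]].
- by apply/set0Pn; exists c; rewrite inE cA nxc.
- apply/set0Pn; exists x; rewrite in_setD inE xU andbT negb_and.
  by case xA: (x \in A) => //; have := Ax x xA; rewrite eqxx.
right=> z y; rewrite inE => /andP[zA nxz]; rewrite in_setD inE negb_and negbK => /andP[hy yU].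
case: (eqVneq y x) => [->|yx]; first by rewrite sym.
case yA: (y \in A); last first.
  by apply: anti => //; rewrite in_setD yA in_setD1 yx yU.
move: hy; rewrite yA /= => exy.
apply/negP => ezy; apply: noP4.
have /andP[zx zU] := Ax z zA.
have zy : z != y by apply/eqP => zy; move: nxz; rewrite zy exy.
have zb : z != b by apply/eqP => zb; move: bA; rewrite -zb zA.
have yb : y != b by apply/eqP => yb; move: bA; rewrite -yb yA.
exists z, y, x, b; split.
- by [].
- by rewrite /= !inE !negb_or zy zx zb yx yb eq_sym bx.
- by rewrite ezy sym exy exb.
- by rewrite sym nxz !anti.
Qed.

Lemma key (e : rel T) (sym : symmetric e) (U : {set T}) (x : T) (X : {set T}) :
  x \in U -> X \subset U :\ x -> X != set0 -> (U :\ x) :\: X != set0 ->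
  (forall a y, a \in X -> y \in (U :\ x) :\: X -> ~~ e a y) ->
  (exists2 c, c \in U :\ x & ~~ e x c) ->
  ~ has_induced_P4 e U -> hsplit e U.
Proof.
move=> xU XU Xn Bn anti [c cU nxc] noP4.
set B := (U :\ x) :\: X in Bn anti *.
have BU : B \subset U :\ x by apply: subsetDl.
have xX : x \notin X by apply/negP => /(subsetP XU); rewrite in_setD1 eqxx.
have xB : x \notin B by rewrite in_setD in_setD1 eqxx andbF.
have inU z : z \in U :\ x -> z \in U by rewrite in_setD1 => /andP[].
case: (boolP [exists y in B, e x y]) => [/existsP[y /andP[yB exy]] | /existsPn noB]; last first.
  exists B; split.
  - by apply/subsetP=> z /(subsetP BU) /inU.
  - by [].
  - by apply/set0Pn; exists x; rewrite in_setD xB xU.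
  right=> z y zB; rewrite in_setD => /andP[yB yU].
  case: (eqVneq y x) => [->|yx]; first by rewrite sym; have := noB z; rewrite zB.
  rewrite sym; apply: anti; last by [].
  by move: yB; rewrite in_setD in_setD1 yx yU; case: (y \in X).
case: (boolP [exists a in X, e x a]) => [/existsP[a /andP[aX exa]] | /existsPn noX]; last first.
  exists X; split.
  - by apply/subsetP=> z /(subsetP XU) /inU.
  - by [].
  - by apply/set0Pn; exists x; rewrite in_setD xX xU.
  right=> z w zX; rewrite in_setD => /andP[yX yU].
  case: (eqVneq w x) => [->|yx]; first by rewrite sym; have := noX z; rewrite zX.
  by apply: anti; rewrite // in_setD yX in_setD1 yx yU.
case cX: (c \in X).
  by apply: (core sym xU XU anti cX nxc yB exy noP4).
have cB : c \in B by rewrite in_setD cX cU.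
have aB : a \in (U :\ x) :\: B by rewrite in_setD /B in_setD aX (subsetP XU).
apply: (core sym xU BU _ cB nxc aB exa noP4).
move=> a' w a'B; rewrite in_setD /B in_setD negb_and negbK => /andP[hy yU].
rewrite sym; apply: anti; last by [].
by move: hy; rewrite yU orbF.
Qed.

Definition ce (e : rel T) : rel T := fun a b => (a != b) && ~~ e a b.

Lemma ce_sym e : symmetric e -> symmetric (ce e).
Proof. by move=> sym a b; rewrite /ce eq_sym sym. Qed.

Lemma ce_P4 e U : symmetric e -> has_induced_P4 (ce e) U -> has_induced_P4 e U.
Proof.
move=> sym [a [b [c [d [[aU bU cU dU] u [eab ebc ecd] [nac nad nbd]]]]]].
move: u; rewrite /= !inE !negb_or => /and4P[/and3P[ab ac ad] /andP[bc bd] cd _].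
move: eab ebc ecd nac nad nbd; rewrite /ce ab bc cd ac ad bd /= !negbK.
move=> eab ebc ecd eac ead ebd.
exists b, d, a, c; split => //.
- by rewrite /= !inE !negb_or bd eq_sym ab bc eq_sym ad eq_sym cd ac.
- by rewrite ebd sym ead.
- by rewrite sym eab ebc sym ecd.
Qed.

Lemma ce_split e U : hsplit (ce e) U -> hsplit e U.
Proof.
move=> [X [XU Xn Bn h]]; exists X; split => //.
have ne z y : z \in X -> y \in U :\: X -> z != y.
  by move=> zX yB; apply/eqP => zy; move: yB; rewrite -zy in_setD zX.
case: h => h; [right|left] => z y zX yB; have := h z y zX yB; rewrite /ce ne //=.
by rewrite negbK.
Qed.

Lemma sub_cog (e : rel T) (A B : {set T}) :
  B \subset A -> ~ has_induced_P4 e A -> ~ has_induced_P4 e B.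
Proof.
move=> BA nA [a [b [c [d [[aB bB cB dB] u E N]]]]]; apply: nA.
by exists a, b, c, d; split => //; split; apply: (subsetP BA).
Qed.

Lemma step (e : rel T) (U : {set T}) (x : T) : symmetric e -> x \in U -> 1 < #|U| ->
  (forall e' : rel T, symmetric e' -> 1 < #|U :\ x| -> ~ has_induced_P4 e' (U :\ x) ->
     hsplit e' (U :\ x)) ->
  ~ has_induced_P4 e U -> hsplit e U.
Proof.
move=> sym xU cU IH noP4.
have cD : #|U| = (#|U :\ x|).+1 by rewrite (cardsD1 x U) xU.
have DU : U :\: [set x] = U :\ x by [].
have U'n : U :\ x != set0 by rewrite -card_gt0 -ltnS -cD.
have x1 : [set x] \subset U by rewrite sub1set.
have x1n : [set x] != set0 by apply/set0Pn; exists x; rewrite inE.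
case: (boolP [exists y in U :\ x, ~~ e x y]) => [/exists_inP[c cU' nxc] | /exists_inPn all]; last first.
  exists [set x]; split => //; left=> z y; rewrite inE => /eqP -> yU.
  by have := all y yU; rewrite negbK.
case: (boolP [exists y in U :\ x, e x y]) => [/exists_inP[b bU' exb] | /exists_inPn none]; last first.
  by exists [set x]; split => //; right=> z y; rewrite inE => /eqP -> yU; apply: none.
case: (leqP #|U :\ x| 1) => h1.
  by have := card_le1_eqP h1 b c bU' cU' => bc; move: nxc; rewrite bc exb.
have noP4' e' : ~ has_induced_P4 e' U -> ~ has_induced_P4 e' (U :\ x).
  by apply: sub_cog; apply: subsetDl.
have [X [XU Xn Bn [comp|anti]]] := IH e sym h1 (noP4' e noP4); last first.
  by apply: (key sym xU XU Xn Bn anti _ noP4); exists c.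
apply: ce_split.
apply: (key (ce_sym sym) xU XU Xn Bn).
- by move=> a y aX yB; rewrite /ce comp // andbF.
- by exists b => //; rewrite /ce exb andbF.
- by move=> h; apply: noP4; apply: ce_P4.
Qed.

Lemma seinsche n : forall (e : rel T) (U : {set T}), symmetric e -> #|U| = n -> 1 < n ->
  ~ has_induced_P4 e U -> hsplit e U.
Proof.
elim: n => [|n IH] e U sym hc h1 noP4; first by [].
have : U != set0 by rewrite -card_gt0 hc.
case/set0Pn => x xU.
apply: (step sym xU) => //; first by rewrite hc.
have cn : #|U :\ x| = n by move: hc; rewrite (cardsD1 x U) xU => -[].
move=> e' s' h2 nP; apply: (IH e' _ s' cn _ nP).
by rewrite -cn.
Qed.

Lemma cog_pseudo (e : rel T) (W : {set T}) : symmetric e -> cograph e W -> pseudo_cograph e W.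
Proof.
move=> sym cW; case: (leqP #|W| 2) => hW; first by left.
have : W != set0 by rewrite -card_gt0 (ltn_trans _ hW).
case/set0Pn => v vW.
have cD : #|W| = (#|W :\ v|).+1 by rewrite (cardsD1 v W) vW.
have h1 : 1 < #|W :\ v| by rewrite -ltnS -cD.
have [X [XU Xn Bn h]] := seinsche sym (erefl _) h1 (sub_cog (subsetDl W [set v]) cW).
have vX : v \notin X by apply/negP => /(subsetP XU); rewrite in_setD1 eqxx.
have vB : v \notin (W :\ v) :\: X by rewrite in_setD in_setD1 eqxx andbF.
right; exists (v |: X), (v |: ((W :\ v) :\: X)), v; split.
- split.
  + apply/setP => z; rewrite !inE.
    case: (eqVneq z v) => [->|zv]; first by rewrite vW.
    have := subsetP XU z; rewrite in_setD1 zv /=.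
    by case: (z \in X); case: (z \in W) => // ->.
  + apply/setP => z; rewrite !inE.
    by case: (eqVneq z v) => //= _; case: (z \in X).
  + by rewrite cardsU1 vX add1n ltnS card_gt0.
  + by rewrite cardsU1 vB add1n ltnS card_gt0.
- split; apply: (sub_cog _ cW); apply/subsetP => z; rewrite !inE.
  + by case/orP => [/eqP -> // | /(subsetP XU)]; rewrite in_setD1 => /andP[].
  + by case/orP => [/eqP -> // | /and3P[]].
- by rewrite !setU1K.
Qed.

Lemma cog_union (e : rel T) (A B : {set T}) : symmetric e -> cograph e A -> cograph e B ->
  (forall x y, x \in A -> y \in B -> e x y) \/ (forall x y, x \in A -> y \in B -> ~~ e x y) ->
  cograph e (A :|: B).
Proof.
move=> sym cA cB hom [a [b [c [d [[aU bU cU dU] u [eab ebc ecd] [nac nad nbd]]]]]].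
have P4in (S : {set T}) : a \in S -> b \in S -> c \in S -> d \in S -> has_induced_P4 e S.
  by move=> *; exists a, b, c, d.
have inB z : z \in A :|: B -> z \notin A -> z \in B by rewrite inE => /orP[->|].
case: hom => h.
- case aA: (a \in A).
  + have cA' : c \in A by apply/negPn/negP => /(inB _ cU) /(h _ _ aA); rewrite (negbTE nac).
    have dA : d \in A by apply/negPn/negP => /(inB _ dU) /(h _ _ aA); rewrite (negbTE nad).
    have bA : b \in A.
      apply/negPn/negP => /(inB _ bU) bB; have := h _ _ dA bB; rewrite sym (negbTE nbd).
      by [].
    by apply: cA; apply: P4in.
  + have aB := inB _ aU (negbT aA).
    have cB' : c \notin A by apply/negP => /(h _ _)/(_ aB); rewrite sym (negbTE nac).
    have dB : d \notin A by apply/negP => /(h _ _)/(_ aB); rewrite sym (negbTE nad).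
    have bB : b \notin A by apply/negP => /(h _ _)/(_ (inB _ dU dB)); rewrite (negbTE nbd).
    by apply: cB; apply: P4in; [exact: aB | exact: inB _ bU bB | exact: inB _ cU cB' | exact: inB _ dU dB].
- case aA: (a \in A).
  + have bA : b \in A by apply/negPn/negP => /(inB _ bU) /(h _ _ aA); rewrite eab.
    have cA' : c \in A by apply/negPn/negP => /(inB _ cU) /(h _ _ bA); rewrite ebc.
    have dA : d \in A by apply/negPn/negP => /(inB _ dU) /(h _ _ cA'); rewrite ecd.
    by apply: cA; apply: P4in.
  + have aB := inB _ aU (negbT aA).
    have bB : b \notin A by apply/negP => /(h _ _)/(_ aB); rewrite sym eab.
    have cB' : c \notin A by apply/negP => /(h _ _)/(_ (inB _ bU bB)); rewrite sym ebc.
    have dB : d \notin A by apply/negP => /(h _ _)/(_ (inB _ cU cB')); rewrite sym ecd.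
    by apply: cB; apply: P4in; [exact: aB | exact: inB _ bU bB | exact: inB _ cU cB' | exact: inB _ dU dB].
Qed.
End S.

Theorem mainTheorem9 (T : finType) (e : rel T)
    (e_sym : symmetric e) (e_irr : irreflexive e) (V : {set T}) :
  pseudo_cograph e V <-> (forall W : {set T}, W \subset V -> pseudo_cograph e W).
Proof.
split; last by move=> h; apply: h.
move=> pV W WV.
case: pV => [le2 | [V1 [V2 [v [[eV iV c1 c2] [g1 g2] F3]]]]].
  by left; apply: leq_trans (subset_leq_card WV) le2.
have WU z : z \in W -> (z \in V1) || (z \in V2).
  by move=> zW; have := subsetP WV z zW; rewrite eV inE.
have iv z : (z \in V1) && (z \in V2) = (z == v).
  by move/setP: iV => /(_ z); rewrite !inE.
have v1 : v \in V1 by have := iv v; rewrite eqxx => /andP[].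
have v2 : v \in V2 by have := iv v; rewrite eqxx => /andP[].
case: (boolP (v \in W)) => vW.
  case: (leqP #|W :&: V1| 1) => h1.
    apply: cog_pseudo => //; apply: (sub_cog _ g2); apply/subsetP => z zW.
    case/orP: (WU z zW) => // z1.
    have := card_le1_eqP h1 z v; rewrite !inE zW z1 vW v1 => /(_ isT isT) <-.
    exact: v2.
  case: (leqP #|W :&: V2| 1) => h2.
    apply: cog_pseudo => //; apply: (sub_cog _ g1); apply/subsetP => z zW.
    case/orP: (WU z zW) => // z2.
    have := card_le1_eqP h2 z v; rewrite !inE zW z2 vW v2 => /(_ isT isT) <-.
    exact: v1.
  right; exists (W :&: V1), (W :&: V2), v; split.
  - split => //.
    + apply/setP => z; rewrite !inE; case zW: (z \in W) => //=.
      by have := WU z zW.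
    + apply/setP => z; rewrite !inE -andbA.
      case: (eqVneq z v) => [->|zv]; first by rewrite vW v1 v2.
      case: (z \in W) => //=; have := iv z; rewrite (negbTE zv).
      by case: (z \in V1); case: (z \in V2).
  - by split; apply: (sub_cog _ (_ : cograph e _)); [apply: subsetIr | exact: g1 | apply: subsetIr | exact: g2].
  - case: F3 => h; [left|right] => x y; rewrite !inE => /and3P[xv xW x1] /and3P[yv yW y2];
      by apply: h; rewrite !inE ?xv ?yv ?x1 ?y2.
apply: cog_pseudo => //.
have -> : W = (W :&: V1) :|: (W :&: V2).
  apply/setP => z; rewrite !inE; case zW: (z \in W) => //=.
  by have := WU z zW.
apply: cog_union => //.
- by apply: (sub_cog _ g1); apply: subsetIr.
- by apply: (sub_cog _ g2); apply: subsetIr.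
- have nv z : z \in W -> z != v by move=> zW; apply/eqP => zv; move: vW; rewrite -zv zW.
  case: F3 => h; [left|right] => x y; rewrite !inE => /andP[xW x1] /andP[yW y2];
    by apply: h; rewrite !inE ?nv ?x1 ?y2.
Qed.
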